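(* Let $e$ be a directed edge of $\Gamma$ labeled $y$, not on $T$, from $g$ to $g'=gy$. Write $\gamma=\mathrm{nf}(g)=x^{i_n}y^{\epsilon_n}\cdots x^{i_1}y^{\epsilon_1}x^{i_0}$ and $\gamma'=\mathrm{nf}(g')=x^{j_{n'}}y^{\varepsilon_{n'}}\cdots x^{j_1}y^{\varepsilon_1}x^{j_0}$, let $s_k=i_k+\cdots+i_0$ ($0\le k\le n$), $s'_k=j_k+\cdots+j_0$ ($0\le k\le n'$), let $m=\min\{k\mid s_k\le0\}$ (or $m=n$ if no such $k$) and $m'=\min\{k\mid s'_k\le1\}$ (or $m'=n'$ if no such $k$). Then $m=m'$, and the sequence of $y$-rule sizes $(s_0,\dots,s_{m-1})$ used in rewriting $\gamma y$ to $\gamma'$ coincides (in order) with the sequence of $y^{-1}$-rule sizes $(s'_0-1,\dots,s'_{m'-1}-1)$ used in rewriting $\gamma' y^{-1}$ to $\gamma$; that is, $s'_k-1=s_k$ for $0\le k\le m-1$.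
   Context: $F$ is Thompson's group with generators $x,y$, $A=\{x^{\pm1},y^{\pm1}\}$, $\Gamma$ its Cayley graph over $A$. Guba–Sapir's convergent rewriting system $\Sigma$ consists of free reductions $aa^{-1}\to\emptyset$ ($a\in A$), the $y$-rules of size $i$: $y^\epsilon x^iy\to x^iyx^{-i-1}y^\epsilon x^{i+1}$, and the $y^{-1}$-rules of size $i$: $y^\epsilon x^{i+1}y^{-1}\to x^{i+1}y^{-1}x^{-i}y^\epsilon x^i$ ($\epsilon\in\{1,-1\}$, $i\ge1$). $\mathcal N$ is the set of $\Sigma$-irreducible words (unique normal forms for $F$), and $\mathrm{nf}(w)$ denotes the word of $\mathcal N$ representing the same element as $w$. $T$ is the subtree of $\Gamma$ whose non-backtracking paths from the identity are labeled exactly by the words of $\mathcal N$. *)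

(* Defs.v *)
From Stdlib Require Import ZArith List.
Import ListNotations.
Open Scope Z_scope.

Inductive letter : Type := X | Xi | Y | Yi.

Definition inv (a : letter) : letter :=
  match a with X => Xi | Xi => X | Y => Yi | Yi => Y end.

Definition word := list letter.

Definition xpow (i : Z) : word :=
  if 0 <=? i then repeat X (Z.to_nat i) else repeat Xi (Z.to_nat (- i)).
Definition ypow (e : bool) : letter := if e then Y else Yi.
Definition xn (n : nat) : word := repeat X n.
Definition xin (n : nat) : word := repeat Xi n.

(* Thompson's group F = < x, y | [x y^-1, x^-1 y x], [x y^-1, x^-2 y x^2] >,
   with [a,b] = a^-1 b^-1 a b.  Relators as words. *)
Definition winv (w : word) : word := rev (map inv w).
Definition comm (a b : word) : word := winv a ++ winv b ++ a ++ b.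
Definition rel1 : word := comm [X; Yi] ([Xi; Y; X]).
Definition rel2 : word := comm [X; Yi] ([Xi; Xi; Y; X; X]).

Inductive elem_step : word -> word -> Prop :=
| es_free : forall u v a, elem_step (u ++ [a; inv a] ++ v) (u ++ v)
| es_rel1 : forall u v, elem_step (u ++ rel1 ++ v) (u ++ v)
| es_rel2 : forall u v, elem_step (u ++ rel2 ++ v) (u ++ v).

Inductive weq : word -> word -> Prop :=
| weq_refl : forall u, weq u u
| weq_step : forall u v, elem_step u v -> weq u v
| weq_sym : forall u v, weq u v -> weq v u
| weq_trans : forall u v w, weq u v -> weq v w -> weq u w.

Inductive lhs : word -> Prop :=
| lhs_free : forall a, lhs [a; inv a]
| lhs_yrule : forall (e : bool) (i : nat), (1 <= i)%nat ->
    lhs ([ypow e] ++ xn i ++ [Y])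
| lhs_yirule : forall (e : bool) (i : nat), (1 <= i)%nat ->
    lhs ([ypow e] ++ xn (S i) ++ [Yi]).

Definition irreducible (w : word) : Prop :=
  ~ exists u l v, w = u ++ l ++ v /\ lhs l.

(* The directed edge of Gamma from g (represented by the word w) to g a,
   labelled a, lies on the tree T: it is traversed (in either direction)
   by the path from the identity labelled by some word of N. *)
Definition edge_on_T (w : word) (a : letter) : Prop :=
  exists u v,
    (irreducible (u ++ a :: v) /\ weq u w) \/
    (irreducible (u ++ inv a :: v) /\ weq u (w ++ [a])).

Fixpoint syl (n : nat) (is : nat -> Z) (eps : nat -> bool) : word :=
  match n with
  | O => xpow (is O)
  | S k => xpow (is (S k)) ++ [ypow (eps (S k))] ++ syl k is eps
  end.

Fixpoint psum (is : nat -> Z) (k : nat) : Z :=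
  match k with
  | O => is O
  | S j => is (S j) + psum is j
  end.

(* min { k | k <= n, s k <= c }, or n if there is no such k. *)
Fixpoint find_le_aux (s : nat -> Z) (c : Z) (k fuel : nat) : nat :=
  match fuel with
  | O => k
  | S f => if s k <=? c then k else find_le_aux s c (S k) f
  end.
Definition first_le (s : nat -> Z) (c : Z) (n : nat) : nat :=
  find_le_aux s c O n.

(* Main.v *)
Require Import Defs.
From Stdlib Require Import ZArith List Lia Bool.
Import ListNotations.
Open Scope bool_scope.
Open Scope Z_scope.

Inductive nfs := Top (a : Z) | Cons (i : Z) (e : bool) (r : nfs).

Fixpoint toword (s : nfs) : word :=
  match s with Top a => xpow a | Cons i e r => toword r ++ [ypow e] ++ xpow i end.

Definition addx (d : Z) (s : nfs) :=
  match s with Top a => Top (a + d) | Cons i e r => Cons (i + d) e r end.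

Definition inner (e : bool) (r : nfs) : Prop :=
  match r with
  | Top _ => True
  | Cons k e' _ => if e then (k <= 0 /\ (k = 0 -> e' = true))
                   else (k <= 1 /\ (k = 0 -> e' = false))
  end.

Fixpoint nfok (s : nfs) : Prop :=
  match s with Top _ => True | Cons _ e r => inner e r /\ nfok r end.

Fixpoint fY (s : nfs) (c : Z) : nfs :=
  match s with
  | Top a => Cons 0 true (Top (a + c))
  | Cons i e r =>
      if 1 <=? i + c then Cons (i + c + 1) e (addx (- (i + c) - 1) (fY r (i + c)))
      else if (i + c =? 0) && negb e then r else Cons 0 true (Cons (i + c) e r)
  end.

Fixpoint gY (s : nfs) (c : Z) : nfs :=
  match s with
  | Top a => Cons 0 false (Top (a + c))
  | Cons i e r =>
      if 2 <=? i + c then Cons (i + c - 1) e (addx (- (i + c) + 1) (gY r (i + c)))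
      else if (i + c =? 0) && e then r else Cons 0 false (Cons (i + c) e r)
  end.

Ltac zsimpl := repeat match goal with
  | H: (_ <=? _) = true |- _ => apply Z.leb_le in H
  | H: (_ <=? _) = false |- _ => apply Z.leb_gt in H
  | H: (_ =? _) = true |- _ => apply Z.eqb_eq in H
  | H: (_ =? _) = false |- _ => apply Z.eqb_neq in H
  end.

Ltac feq := first [reflexivity | lia | progress f_equal; feq].

Lemma fY_addx d s c : fY (addx d s) c = fY s (d + c).
Proof. destruct s; simpl.
- do 2 f_equal; lia.
- replace (i + d + c) with (i + (d + c)) by lia; reflexivity. Qed.

Lemma gY_addx d s c : gY (addx d s) c = gY s (d + c).
Proof. destruct s; simpl.
- do 2 f_equal; lia.
- replace (i + d + c) with (i + (d + c)) by lia; reflexivity. Qed.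

Lemma addx_addx d d' s : addx d (addx d' s) = addx (d' + d) s.
Proof. destruct s; simpl; f_equal; lia. Qed.

Lemma addx0 s : addx 0 s = s.
Proof. destruct s; simpl; f_equal; lia. Qed.

Lemma nfok_addx d s : nfok (addx d s) <-> nfok s.
Proof. destruct s; simpl; tauto. Qed.

Lemma fY_nfok s c : nfok s -> nfok (fY s c).
Proof.
  revert c; induction s as [a|i e r IH]; intros c H; simpl in *.
  - split; exact I.
  - destruct H as [Hin Hr].
    destruct (1 <=? i + c) eqn:E1; zsimpl.
    + split; [| apply nfok_addx; apply IH; exact Hr].
      destruct r as [a'|k e' r']; simpl in *.
      * destruct e; lia.
      * destruct (1 <=? k + (i + c)) eqn:E2; zsimpl; simpl.
        -- replace (k + (i + c) + 1 + (- (i + c) - 1)) with k by lia. exact Hin.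
        -- destruct ((k + (i + c) =? 0) && negb e') eqn:E3.
           ++ destruct Hr as [Hr1 Hr2]. apply andb_prop in E3 as [E3 E4]; zsimpl.
              destruct e'; simpl in E4; try discriminate.
              destruct r' as [a''|k'' e'' r'']; simpl in *; auto.
              destruct e; lia.
           ++ simpl. destruct e; lia.
    + destruct ((i + c =? 0) && negb e) eqn:E3.
      * exact Hr.
      * simpl. split; [|split; assumption].
        destruct (Z.eq_dec (i + c) 0) as [E|E].
        -- rewrite E in E3. destruct e; simpl in E3; try discriminate. lia.
        -- lia.
Qed.

Lemma gY_nfok s c : nfok s -> nfok (gY s c).
Proof.
  revert c; induction s as [a|i e r IH]; intros c H; simpl in *.
  - split; exact I.
  - destruct H as [Hin Hr].
    destruct (2 <=? i + c) eqn:E1; zsimpl.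
    + split; [| apply nfok_addx; apply IH; exact Hr].
      destruct r as [a'|k e' r']; simpl in *.
      * destruct e; lia.
      * destruct (2 <=? k + (i + c)) eqn:E2; zsimpl; simpl.
        -- replace (k + (i + c) - 1 + (- (i + c) + 1)) with k by lia. exact Hin.
        -- destruct ((k + (i + c) =? 0) && e') eqn:E3.
           ++ destruct Hr as [Hr1 Hr2]. apply andb_prop in E3 as [E3 E4]; zsimpl.
              subst e'.
              destruct r' as [a''|k'' e'' r'']; simpl in *; auto.
              destruct e; lia.
           ++ simpl. destruct e; lia.
    + destruct ((i + c =? 0) && e) eqn:E3.
      * exact Hr.
      * simpl. split; [|split; assumption].
        destruct (Z.eq_dec (i + c) 0) as [E|E].
        -- rewrite E in E3. destruct e; simpl in E3; try discriminate. lia.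
        -- lia.
Qed.

Lemma gY_fY s c : nfok s -> gY (fY s c) 0 = addx c s.
Proof.
  revert c; induction s as [a|i e r IH]; intros c H; simpl in *.
  - reflexivity.
  - destruct H as [Hin Hr].
    destruct (1 <=? i + c) eqn:E1; zsimpl.
    + simpl. destruct (2 <=? i + c + 1 + 0) eqn:E2; zsimpl; [|lia].
      rewrite gY_addx. replace (- (i + c) - 1 + (i + c + 1 + 0)) with 0 by lia.
      rewrite IH by exact Hr. rewrite addx_addx.
      replace (i + c + (- (i + c + 1 + 0) + 1)) with 0 by lia. rewrite addx0.
      feq.
    + destruct ((i + c =? 0) && negb e) eqn:E3.
      * apply andb_prop in E3 as [E3 E4]; zsimpl. destruct e; simpl in E4; try discriminate.
        destruct r as [a'|k e' r']; simpl in *.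
        -- feq.
        -- destruct (2 <=? k + 0) eqn:E5; zsimpl; [lia|].
           destruct ((k + 0 =? 0) && e') eqn:E6.
           ++ apply andb_prop in E6 as [E6 E7]; zsimpl. subst e'. lia.
           ++ feq.
      * simpl. feq.
Qed.

Lemma fY_gY s c : nfok s -> fY (gY s c) 0 = addx c s.
Proof.
  revert c; induction s as [a|i e r IH]; intros c H; simpl in *.
  - reflexivity.
  - destruct H as [Hin Hr].
    destruct (2 <=? i + c) eqn:E1; zsimpl.
    + simpl. destruct (1 <=? i + c - 1 + 0) eqn:E2; zsimpl; [|lia].
      rewrite fY_addx. replace (- (i + c) + 1 + (i + c - 1 + 0)) with 0 by lia.
      rewrite IH by exact Hr. rewrite addx_addx.
      replace (i + c + (- (i + c - 1 + 0) - 1)) with 0 by lia. rewrite addx0.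
      feq.
    + destruct ((i + c =? 0) && e) eqn:E3.
      * apply andb_prop in E3 as [E3 E4]; zsimpl. subst e.
        destruct r as [a'|k e' r']; simpl in *.
        -- feq.
        -- destruct (1 <=? k + 0) eqn:E5; zsimpl; [lia|].
           destruct ((k + 0 =? 0) && negb e') eqn:E6.
           ++ apply andb_prop in E6 as [E6 E7]; zsimpl. destruct e'; simpl in E7; try discriminate. lia.
           ++ feq.
      * simpl. feq.
Qed.

Ltac dif1 := match goal with |- context [if ?b then _ else _] =>
  match b with
  | (?b1 && ?b2) => let E := fresh "E" in destruct b1 eqn:E
  | _ => let E := fresh "E" in destruct b eqn:E
  end end.
Ltac crunch := repeat (dif1; simpl; zsimpl; try (exfalso; lia)).

Lemma PY t s c : 1 <= t -> nfok s ->
  fY (fY s (c - t)) t = addx (t+1) (fY (fY s c) (-t-1)).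
Proof.
  intros Ht. revert c; induction s as [a|i e r IH]; intros c H.
  - simpl. crunch. feq.
  - simpl in H. destruct H as [Hin Hr]. simpl.
    crunch; try feq.
    + rewrite !fY_addx.
      replace (- (i + (c - t)) - 1 + (i + (c - t) + 1 + t)) with t by lia.
      replace (- (i + c) - 1 + (i + c + 1 + (- t - 1))) with (-t-1) by lia.
      replace (i + (c - t)) with ((i + c) - t) by lia.
      rewrite IH by exact Hr. rewrite !addx_addx. feq.
    + rewrite addx_addx. replace (i + c) with t by lia.
      replace (- t - 1 + (t + 1)) with 0 by lia. rewrite addx0. reflexivity.
    + destruct e; simpl in *; try discriminate.
      destruct r as [a'|k e' r']; simpl in *.
      * feq.
      * crunch; feq.
Qed.

Lemma relgen t s : 1 <= t -> nfok s ->
  addx t (fY (gY (gY (fY s 0) (-(t+1))) (t+1)) (-t)) = s.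
Proof.
  intros Ht Hs.
  set (S1 := fY s 0). set (S3 := gY S1 (-(t+1))). set (S5 := gY S3 (t+1)).
  assert (N1 : nfok S1) by (apply fY_nfok; exact Hs).
  assert (N3 : nfok S3) by (apply gY_nfok; exact N1).
  assert (N5 : nfok S5) by (apply gY_nfok; exact N3).
  pose proof (PY t S5 0 Ht N5) as P.
  assert (E5: fY S5 0 = addx (t+1) S3) by (unfold S5; apply fY_gY; exact N3).
  assert (E3: fY S3 0 = addx (-(t+1)) S1) by (unfold S3; apply fY_gY; exact N1).
  rewrite E5, fY_addx in P.
  replace (t + 1 + (- t - 1)) with 0 in P by lia.
  replace (0 - t) with (-t) in P by lia.
  rewrite E3, addx_addx in P.
  replace (- (t + 1) + (t + 1)) with 0 in P by lia. rewrite addx0 in P.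
  assert (P' : fY (addx t (fY S5 (-t))) 0 = S1) by (rewrite fY_addx; replace (t+0) with t by lia; exact P).
  assert (NZ : nfok (addx t (fY S5 (- t)))) by (apply nfok_addx, fY_nfok, N5).
  pose proof (gY_fY _ 0 NZ) as G1. rewrite P' in G1. unfold S1 in G1.
  rewrite gY_fY in G1 by exact Hs. rewrite !addx0 in G1. symmetry; exact G1.
Qed.

Definition act (a : letter) (s : nfs) : nfs :=
  match a with X => addx 1 s | Xi => addx (-1) s | Y => fY s 0 | Yi => gY s 0 end.
Definition actw (w : word) (s : nfs) : nfs := fold_left (fun s a => act a s) w s.
Definition nf (w : word) : nfs := actw w (Top 0).

Lemma act_nfok a s : nfok s -> nfok (act a s).
Proof.
  destruct a; simpl; intro H; try (apply nfok_addx; exact H).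
  apply fY_nfok; exact H. apply gY_nfok; exact H.
Qed.

Lemma actw_nfok w s : nfok s -> nfok (actw w s).
Proof.
  revert s; induction w as [|a w IH]; intros s H; simpl; auto.
  apply IH. apply act_nfok; exact H.
Qed.

Lemma actw_app u v s : actw (u ++ v) s = actw v (actw u s).
Proof. unfold actw. apply fold_left_app. Qed.

Lemma act_inv a s : nfok s -> act (inv a) (act a s) = s.
Proof.
  intro H; destruct a; simpl.
  - rewrite addx_addx; replace (1 + -1) with 0 by lia; apply addx0.
  - rewrite addx_addx; replace (-1 + 1) with 0 by lia; apply addx0.
  - rewrite gY_fY by exact H; apply addx0.
  - rewrite fY_gY by exact H; apply addx0.
Qed.

Lemma rel1_id s : nfok s -> actw rel1 s = s.
Proof.
  intro H. unfold rel1, comm, winv. simpl.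
  rewrite ?fY_addx, ?gY_addx, ?addx_addx.
  rewrite ?fY_addx, ?gY_addx, ?addx_addx.
  rewrite ?fY_addx, ?gY_addx, ?addx_addx.
  replace (-1 + (-1 + 0)) with (-(1+1)) by lia.
  replace (1 + (1 + 0)) with (1+1) by lia.
  replace (-1 + 0) with (-1) by lia.
  apply relgen; [lia | exact H].
Qed.

Lemma rel2_id s : nfok s -> actw rel2 s = s.
Proof.
  intro H. unfold rel2, comm, winv. simpl.
  rewrite ?fY_addx, ?gY_addx, ?addx_addx.
  rewrite ?fY_addx, ?gY_addx, ?addx_addx.
  rewrite ?fY_addx, ?gY_addx, ?addx_addx.
  replace (-1 + (-1 + (-1 + 0))) with (-(2+1)) by lia.
  replace (1 + (1 + (1 + 0))) with (2+1) by lia.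
  replace (-1 + (-1 + 0)) with (-2) by lia.
  replace (1 + 1) with 2 by lia.
  apply relgen; [lia | exact H].
Qed.

Lemma nf_nfok w : nfok (nf w).
Proof. apply actw_nfok. exact I. Qed.

Lemma elem_nf u v : elem_step u v -> nf u = nf v.
Proof.
  intro Hs. destruct Hs as [u v a|u v|u v]; unfold nf; rewrite !actw_app.
  - f_equal. simpl. apply act_inv. apply actw_nfok; exact I.
  - f_equal. apply rel1_id. apply actw_nfok; exact I.
  - f_equal. apply rel2_id. apply actw_nfok; exact I.
Qed.

Lemma weq_nf u v : weq u v -> nf u = nf v.
Proof.
  induction 1.
  - reflexivity.
  - apply elem_nf; assumption.
  - symmetry; assumption.
  - congruence.
Qed.


Lemma rep_snoc {T} (a : T) n : repeat a (S n) = repeat a n ++ [a].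
Proof. induction n; simpl; auto. rewrite <- IHn. reflexivity. Qed.

Lemma xpow_pos_S i : 0 <= i -> xpow (i + 1) = xpow i ++ [X].
Proof.
  intro H. unfold xpow. destruct (0 <=? i + 1) eqn:E1; zsimpl; [|lia].
  destruct (0 <=? i) eqn:E2; zsimpl; [|lia].
  replace (Z.to_nat (i+1)) with (S (Z.to_nat i)) by lia. apply rep_snoc.
Qed.

Lemma xpow_neg_S i : i < 0 -> xpow i = xpow (i + 1) ++ [Xi].
Proof.
  intro H. unfold xpow. destruct (0 <=? i) eqn:E2; zsimpl; [lia|].
  destruct (0 <=? i + 1) eqn:E1; zsimpl.
  - replace (i+1) with 0 by lia. replace (Z.to_nat (-i)) with 1%nat by lia. reflexivity.
  - replace (Z.to_nat (-i)) with (S (Z.to_nat (-(i+1)))) by lia. apply rep_snoc.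
Qed.

Lemma xpow_npos_P i : i <= 0 -> xpow (i - 1) = xpow i ++ [Xi].
Proof.
  intro H. unfold xpow. destruct (0 <=? i - 1) eqn:E1; zsimpl; [lia|].
  destruct (0 <=? i) eqn:E2; zsimpl.
  - replace i with 0 by lia. reflexivity.
  - replace (Z.to_nat (-(i-1))) with (S (Z.to_nat (-i))) by lia. apply rep_snoc.
Qed.

Lemma xpow_pos_P i : 0 < i -> xpow i = xpow (i - 1) ++ [X].
Proof.
  intro H. unfold xpow. destruct (0 <=? i) eqn:E2; zsimpl; [|lia].
  destruct (0 <=? i - 1) eqn:E1; zsimpl; [|lia].
  replace (Z.to_nat i) with (S (Z.to_nat (i-1))) by lia. apply rep_snoc.
Qed.

Lemma xpow_xn i : 0 <= i -> xpow i = xn (Z.to_nat i).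
Proof. intro H. unfold xpow. destruct (0 <=? i) eqn:E; zsimpl; [reflexivity|lia]. Qed.

Lemma red u l v : lhs l -> ~ irreducible (u ++ l ++ v).
Proof. intros Hl Hi. apply Hi. exists u, l, v. auto. Qed.

Lemma irr_prefix w a : irreducible (w ++ [a]) -> irreducible w.
Proof.
  intros H [u [l [v [E Hl]]]]. apply H. exists u, l, (v ++ [a]). split; auto.
  rewrite E. rewrite <- !app_assoc. reflexivity.
Qed.

Lemma stepX P i : irreducible (P ++ xpow i ++ [X]) -> xpow (i + 1) = xpow i ++ [X].
Proof.
  intro H. destruct (Z_lt_le_dec i 0) as [Hi|Hi]; [|apply xpow_pos_S; exact Hi].
  exfalso. rewrite (xpow_neg_S i Hi) in H.
  apply (red (P ++ xpow (i+1)) [Xi; X] [] (lhs_free Xi)).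
  rewrite <- !app_assoc in *. exact H.
Qed.

Lemma stepXi P i : irreducible (P ++ xpow i ++ [Xi]) -> xpow (i - 1) = xpow i ++ [Xi].
Proof.
  intro H. destruct (Z_lt_le_dec 0 i) as [Hi|Hi]; [|apply xpow_npos_P; exact Hi].
  exfalso. rewrite (xpow_pos_P i Hi) in H.
  apply (red (P ++ xpow (i-1)) [X; Xi] [] (lhs_free X)).
  rewrite <- !app_assoc in *. exact H.
Qed.

Lemma step_act a s : nfok s -> irreducible (toword s ++ [a]) ->
  toword (act a s) = toword s ++ [a].
Proof.
  intros Hs H. destruct a; simpl.
  - destruct s as [a0|i e r]; simpl in *.
    + apply (stepX []). exact H.
    + rewrite (stepX (toword r ++ [ypow e]) i).
      * rewrite <- !app_assoc; reflexivity.
      * rewrite <- !app_assoc in *; simpl in *; exact H.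
  - destruct s as [a0|i e r]; simpl in *.
    + apply (stepXi []). exact H.
    + replace (i + -1) with (i - 1) by lia. rewrite (stepXi (toword r ++ [ypow e]) i).
      * rewrite <- !app_assoc; reflexivity.
      * rewrite <- !app_assoc in *; simpl in *; exact H.
  - destruct s as [a0|i e r]; simpl in *.
    + rewrite Z.add_0_r. reflexivity.
    + rewrite Z.add_0_r. destruct (1 <=? i) eqn:E1; zsimpl.
      * exfalso. rewrite (xpow_xn i) in H by lia.
        apply (red (toword r) ([ypow e] ++ xn (Z.to_nat i) ++ [Y]) []).
        -- apply lhs_yrule; lia.
        -- rewrite <- !app_assoc in *. exact H.
      * destruct (i =? 0) eqn:E2; zsimpl.
        -- destruct e; simpl.
           ++ subst i. simpl. rewrite <- !app_assoc. reflexivity.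
           ++ exfalso. subst i. simpl in H.
              apply (red (toword r) [Yi; Y] [] (lhs_free Yi)).
              rewrite <- !app_assoc in *. exact H.
        -- simpl. rewrite <- !app_assoc. reflexivity.
  - destruct s as [a0|i e r]; simpl in *.
    + rewrite Z.add_0_r. reflexivity.
    + rewrite Z.add_0_r. destruct (2 <=? i) eqn:E1; zsimpl.
      * exfalso. rewrite (xpow_xn i) in H by lia.
        replace (Z.to_nat i) with (S (Z.to_nat i - 1)) in H by lia.
        apply (red (toword r) ([ypow e] ++ xn (S (Z.to_nat i - 1)) ++ [Yi]) []).
        -- apply lhs_yirule; lia.
        -- rewrite <- !app_assoc in *. exact H.
      * destruct (i =? 0) eqn:E2; zsimpl.
        -- destruct e; simpl.
           ++ exfalso. subst i. simpl in H.
              apply (red (toword r) [Y; Yi] [] (lhs_free Y)).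
              rewrite <- !app_assoc in *. exact H.
           ++ subst i. simpl. rewrite <- !app_assoc. reflexivity.
        -- simpl. rewrite <- !app_assoc. reflexivity.
Qed.

Lemma nf_irr w : irreducible w -> toword (nf w) = w.
Proof.
  induction w as [|a w IH] using rev_ind; intro H.
  - reflexivity.
  - unfold nf. rewrite actw_app. simpl.
    pose proof (IH (irr_prefix _ _ H)) as E. unfold nf in E.
    rewrite step_act.
    + rewrite E. reflexivity.
    + apply actw_nfok; exact I.
    + rewrite E. exact H.
Qed.

Fixpoint depth (s : nfs) : nat := match s with Top _ => O | Cons _ _ r => S (depth r) end.
Fixpoint ex (s : nfs) (k : nat) : Z :=
  match s, k with
  | Top a, O => a
  | Top _, S _ => 0
  | Cons i _ _, O => i
  | Cons _ _ r, S k => ex r k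
  end.

Lemma fla_S s c k f : find_le_aux s c (S k) f = S (find_le_aux (fun j => s (S j)) c k f).
Proof.
  revert k; induction f as [|f IH]; intro k; simpl; auto.
  destruct (s (S k) <=? c); auto.
Qed.

Lemma fl_S s c n : first_le s c (S n) =
  if s O <=? c then O else S (first_le (fun k => s (S k)) c n).
Proof. unfold first_le. simpl. destruct (s O <=? c); auto. apply fla_S. Qed.

Lemma fla_ext s s' c k f : (forall j, (k <= j < k + f)%nat -> s j = s' j) ->
  find_le_aux s c k f = find_le_aux s' c k f.
Proof.
  revert k; induction f as [|f IH]; intros k H; simpl; auto.
  rewrite (H k) by lia. destruct (s' k <=? c); auto.
  apply IH. intros j Hj. apply H. lia.
Qed.

Lemma fl_ext s s' c n : (forall k, (k < n)%nat -> s k = s' k) ->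
  first_le s c n = first_le s' c n.
Proof. intro H. apply fla_ext. intros j Hj. apply H. lia. Qed.

Lemma fla_le s c k f : (find_le_aux s c k f <= k + f)%nat.
Proof.
  revert k; induction f as [|f IH]; intro k; simpl; [lia|].
  destruct (s k <=? c); [lia|]. specialize (IH (S k)). lia.
Qed.

Lemma fl_le s c n : (first_le s c n <= n)%nat.
Proof. apply fla_le. Qed.

Lemma psum_S f k : psum f (S k) = psum (fun j => f (S j)) k + f O.
Proof. induction k as [|k IH]; simpl in *; lia. Qed.

Lemma psum_ext f g k : (forall j, (j <= k)%nat -> f j = g j) -> psum f k = psum g k.
Proof.
  induction k as [|k IH]; intro H; simpl.
  - apply H; lia.
  - rewrite H by lia. rewrite IH; auto.
Qed.

Lemma psum_add0 f g d k : f O = g O + d -> (forall j, f (S j) = g (S j)) ->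
  psum f k = psum g k + d.
Proof.
  intros H0 HS. induction k as [|k IH]; simpl.
  - exact H0.
  - rewrite IH, HS. lia.
Qed.

Lemma depth_addx d s : depth (addx d s) = depth s.
Proof. destruct s; reflexivity. Qed.

Lemma psum_addx d s k : psum (ex (addx d s)) k = psum (ex s) k + d.
Proof. apply psum_add0; destruct s; simpl; auto. Qed.

Lemma psum_cons i e r k : psum (ex (Cons i e r)) (S k) = psum (ex r) k + i.
Proof. rewrite psum_S. reflexivity. Qed.

Lemma psum_cons0 i e r : psum (ex (Cons i e r)) O = i.
Proof. reflexivity. Qed.

Lemma keyK s c : nfok s ->
  first_le (fun k => c + psum (ex s) k) 0 (depth s) = first_le (psum (ex (fY s c))) 1 (depth (fY s c)) /\
  (forall k : nat, (k < first_le (fun k => (c + psum (ex s) k)%Z) 0%Z (depth s))%nat ->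
     psum (ex (fY s c)) k - 1 = c + psum (ex s) k).
Proof.
  revert c; induction s as [a|i e r IH]; intros c H.
  - simpl. split; [reflexivity| intros k Hk].
    unfold first_le in Hk; simpl in Hk; lia.
  - simpl in H. destruct H as [Hin Hr].
    cbn [fY depth].
    rewrite fl_S; cbv beta; rewrite ?psum_cons0.
    destruct (1 <=? i + c) eqn:E1; zsimpl.
    + destruct (c + i <=? 0) eqn:E2; zsimpl; [lia|].
      cbn [depth]. rewrite depth_addx. rewrite fl_S; cbv beta; rewrite ?psum_cons0.
      destruct (i + c + 1 <=? 1) eqn:E3; zsimpl; [lia|].
      assert (EL : first_le (fun k => c + psum (ex (Cons i e r)) (S k)) 0 (depth r)
                 = first_le (fun k => (i + c) + psum (ex r) k) 0 (depth r)).
      { apply fl_ext. intros k _. rewrite psum_cons. lia. }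
      assert (ER : first_le (fun k => psum (ex (Cons (i + c + 1) e (addx (- (i + c) - 1) (fY r (i + c))))) (S k)) 1 (depth (fY r (i + c)))
                 = first_le (psum (ex (fY r (i + c)))) 1 (depth (fY r (i + c)))).
      { apply fl_ext. intros k _. rewrite psum_cons, psum_addx. lia. }
      rewrite EL, ER.
      destruct (IH (i + c) Hr) as [IH1 IH2].
      split; [rewrite IH1; reflexivity|].
      intros k Hk. destruct k as [|k].
      * simpl. lia.
      * rewrite !psum_cons, psum_addx. specialize (IH2 k ltac:(lia)). lia.
    + destruct (c + i <=? 0) eqn:E2; zsimpl; [|lia].
      split; [| intros k Hk; lia].
      destruct ((i + c =? 0) && negb e) eqn:E3.
      * apply andb_prop in E3 as [E3 E4]; zsimpl. destruct e; simpl in E4; try discriminate.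
        destruct r as [a'|k e' r']; [reflexivity|].
        simpl in Hin. cbn [depth]. rewrite fl_S; cbv beta; rewrite ?psum_cons0.
        destruct (k <=? 1) eqn:E5; zsimpl; [reflexivity|lia].
      * cbn [depth]. rewrite fl_S. reflexivity.
Qed.

Lemma syl_split k is eps : syl (S k) is eps =
  syl k (fun j => is (S j)) (fun j => eps (S j)) ++ [ypow (eps 1%nat)] ++ xpow (is O).
Proof.
  revert is eps; induction k as [|k IH]; intros is eps.
  - reflexivity.
  - change (syl (S (S k)) is eps) with
      (xpow (is (S (S k))) ++ [ypow (eps (S (S k)))] ++ syl (S k) is eps).
    rewrite IH. simpl. rewrite <- !app_assoc. reflexivity.
Qed.

Definition noy (l : word) := Forall (fun a => a <> Y /\ a <> Yi) l.

Lemma noy_xpow i : noy (xpow i).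
Proof.
  unfold noy, xpow. destruct (0 <=? i); apply Forall_forall; intros a Ha;
  apply repeat_spec in Ha; subst; split; discriminate.
Qed.

Lemma ypow_y e : ypow e = Y \/ ypow e = Yi.
Proof. destruct e; auto. Qed.

Lemma cancel_fwd P Q A B e e' : noy P -> noy Q ->
  P ++ ypow e :: A = Q ++ ypow e' :: B -> P = Q /\ e = e' /\ A = B.
Proof.
  revert Q; induction P as [|p P IH]; intros Q HP HQ E; destruct Q as [|q Q]; simpl in E.
  - inversion E. destruct e, e'; simpl in *; try discriminate; auto.
  - inversion HQ as [|? ? [Hq1 Hq2] _]; subst. inversion E; subst.
    destruct e; simpl in *; tauto.
  - inversion HP as [|? ? [Hp1 Hp2] _]; subst. inversion E; subst.
    destruct e'; simpl in *; tauto.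
  - inversion HP; inversion HQ; subst. inversion E; subst.
    destruct (IH Q) as [? [? ?]]; auto. subst; auto.
Qed.

Lemma cancel_bwd A B e e' P Q : noy P -> noy Q ->
  A ++ [ypow e] ++ P = B ++ [ypow e'] ++ Q -> A = B /\ e = e' /\ P = Q.
Proof.
  intros HP HQ E.
  assert (E' : rev P ++ ypow e :: rev A = rev Q ++ ypow e' :: rev B).
  { assert (rev (A ++ [ypow e] ++ P) = rev (B ++ [ypow e'] ++ Q)) by (rewrite E; reflexivity).
    rewrite !rev_app_distr in H. simpl in H. rewrite <- !app_assoc in H. exact H. }
  apply cancel_fwd in E' as [E1 [E2 E3]]; try (apply Forall_rev; assumption).
  split; [|split; auto].
  - rewrite <- (rev_involutive A), <- (rev_involutive B), E3. reflexivity.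
  - rewrite <- (rev_involutive P), <- (rev_involutive Q), E1. reflexivity.
Qed.

Lemma noy_app_y l1 l2 e : ~ noy (l1 ++ ypow e :: l2).
Proof.
  intro H. unfold noy in H. rewrite Forall_forall in H.
  destruct (H (ypow e)) as [H1 H2]. { apply in_or_app. right. left. reflexivity. }
  destruct e; simpl in *; congruence.
Qed.

Lemma xpow_inj i j : xpow i = xpow j -> i = j.
Proof.
  unfold xpow. destruct (0 <=? i) eqn:E1, (0 <=? j) eqn:E2; zsimpl; intro H.
  - apply (f_equal (@length _)) in H. rewrite !repeat_length in H. lia.
  - destruct (Z.to_nat (-j)) eqn:E3; [lia|].
    destruct (Z.to_nat i) eqn:E4; simpl in H; discriminate.
  - destruct (Z.to_nat (-i)) eqn:E3; [lia|].
    destruct (Z.to_nat j) eqn:E4; simpl in H; discriminate.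
  - apply (f_equal (@length _)) in H. rewrite !repeat_length in H. lia.
Qed.

Lemma decomp s n is eps : toword s = syl n is eps ->
  depth s = n /\ forall k, (k <= n)%nat -> ex s k = is k.
Proof.
  revert n is eps; induction s as [a|i e r IH]; intros n is eps H; destruct n as [|n].
  - simpl in H. apply xpow_inj in H. subst. split; auto.
    intros k Hk. replace k with O by lia. reflexivity.
  - exfalso. rewrite syl_split in H. simpl in H.
    apply (noy_app_y _ _ _ (eq_ind _ noy (noy_xpow a) _ H)).
  - exfalso. simpl in H. symmetry in H.
    apply (noy_app_y (toword r) (xpow i) e). rewrite <- H. apply noy_xpow.
  - rewrite syl_split in H. simpl toword in H.
    apply cancel_bwd in H as [H1 [H2 H3]]; try apply noy_xpow.
    apply xpow_inj in H3. destruct (IH _ _ _ H1) as [D1 D2].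
    split; [simpl; auto|].
    intros k Hk. destruct k as [|k]; simpl; auto. apply D2. lia.
Qed.

Theorem lemma4p1 (gamma gamma' : word)
  (n n' : nat) (is js : nat -> Z) (eps eps' : nat -> bool) :
  irreducible gamma -> irreducible gamma' ->
  weq gamma' (gamma ++ [Y]) ->
  ~ edge_on_T gamma Y ->
  gamma = syl n is eps -> gamma' = syl n' js eps' ->
  first_le (psum is) 0 n = first_le (psum js) 1 n' /\
  (forall k : nat, (k < first_le (psum is) 0 n)%nat ->
     psum js k - 1 = psum is k).
Proof.
  intros I1 I2 W _ G1 G2.
  set (s := nf gamma).
  assert (T1 : toword s = gamma) by (apply nf_irr; exact I1).
  assert (T2 : toword (nf gamma') = gamma') by (apply nf_irr; exact I2).
  assert (Ns : nfok s) by apply nf_nfok.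
  assert (F : nf gamma' = fY s 0).
  { rewrite (weq_nf _ _ W). unfold nf. rewrite actw_app. reflexivity. }
  rewrite F in T2.
  rewrite G1 in T1. rewrite G2 in T2.
  destruct (decomp _ _ _ _ T1) as [D1 D2].
  destruct (decomp _ _ _ _ T2) as [D3 D4].
  destruct (keyK s 0 Ns) as [K1 K2].
  rewrite D1, D3 in K1. rewrite D1 in K2.
  assert (A1 : first_le (psum is) 0 n = first_le (fun k => 0 + psum (ex s) k) 0 n).
  { apply fl_ext. intros k Hk. rewrite (psum_ext (ex s) is) by (intros j Hj; apply D2; lia). lia. }
  assert (A2 : first_le (psum js) 1 n' = first_le (psum (ex (fY s 0))) 1 n').
  { apply fl_ext. intros k Hk. apply psum_ext. intros j Hj. symmetry. apply D4. lia. }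
  rewrite A1, A2. split; [exact K1|].
  intros k Hk.
  pose proof (fl_le (fun k => 0 + psum (ex s) k) 0 n).
  pose proof (fl_le (psum (ex (fY s 0))) 1 n').
  rewrite (psum_ext js (ex (fY s 0))) by (intros j Hj; symmetry; apply D4; lia).
  rewrite (psum_ext is (ex s)) by (intros j Hj; symmetry; apply D2; lia).
  specialize (K2 k Hk). lia.
Qed.
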